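(* Assume that the spectra $\Lambda_N[T]$, $\Lambda_D[T]$, $\Lambda_{M_1}[T]$, $\Lambda_{M_2}[T]$, $\Lambda_P[2T]$, $\Lambda_A[2T]$, $\Lambda_N[2T]$, $\Lambda_D[2T]$, $\Lambda_P[4T]$ are all nonempty, that each has a first (smallest) eigenvalue, that this first eigenvalue is simple, and that its eigenfunction has constant sign. Denote these first eigenvalues by $\lambda_0^N[T]$, $\lambda_0^D[T]$, $\lambda_0^{M_1}[T]$, $\lambda_0^{M_2}[T]$, $\lambda_0^P[2T]$, $\lambda_0^A[2T]$, $\lambda_0^N[2T]$, $\lambda_0^D[2T]$, $\lambda_0^P[4T]$. Then, for any $a_0,\dots,a_{2n-1}\in L^1(I)$: 1. $\lambda_0^N[T]=\lambda_0^P[2T]<\lambda_0^D[T]$; 2. $\lambda_0^N[T]=\lambda_0^N[2T]<\lambda_0^{M_1}[T]$; 3. $\lambda_0^N[T]=\lambda_0^P[4T]$; 4. $\lambda_0^{M_2}[T]=\lambda_0^D[2T]<\lambda_0^D[T]$; 5. $\lambda_0^N[T]<\lambda_0^{M_2}[T]$; 6. $\lambda_0^A[2T]=\min\{\lambda_0^{M_1}[T],\lambda_0^{M_2}[T]\}$.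
   Context: Fix $n\ge 1$, $T>0$, $I=[0,T]$, $J=[0,2T]$. $W^{2n,1}(K)$: $u\in C^{2n-1}(K)$ with $u^{(2n-1)}$ absolutely continuous. Let $a_0,\dots,a_{2n-1}$ be integrable on $I$, $Lu=u^{(2n)}+\sum_{k=0}^{2n-1}a_ku^{(k)}$ on $I$. $\widetilde L u=u^{(2n)}+\sum_{k=0}^{n-1}(\hat a_{2k+1}u^{(2k+1)}+\tilde a_{2k}u^{(2k)})$ on $J$, where $\tilde a_{2k}=a_{2k}$, $\hat a_{2k+1}=a_{2k+1}$ on $I$, and $\tilde a_{2k}(t)=a_{2k}(2T-t)$, $\hat a_{2k+1}(t)=-a_{2k+1}(2T-t)$ for $t\in(T,2T]$; $\widetilde{\widetilde L}$ on $[0,4T]$ is obtained by the same construction from $\widetilde L$ (reflection about $2T$). For an operator $M$, $M[\lambda]u=Mu+\lambda u$; $\lambda$ is an eigenvalue of $M$ on $X$ if $M[\lambda]u=0$ a.e. has a nontrivial solution $u\in X$ (an eigenfunction). Spaces ($k=0,\dots,n-1$ unless stated): $X_{N,T}$: $u^{(2k+1)}(0)=u^{(2k+1)}(T)=0$; $X_{D,T}$: $u^{(2k)}(0)=u^{(2k)}(T)=0$; $X_{M_1,T}$: $u^{(2k+1)}(0)=u^{(2k)}(T)=0$; $X_{M_2,T}$: $u^{(2k)}(0)=u^{(2k+1)}(T)=0$ (in $W^{2n,1}(I)$); $X_{P,2T}$: $u^{(k)}(0)=u^{(k)}(2T)$, $k=0,\dots,2n-1$; $X_{A,2T}$: $u^{(k)}(0)=-u^{(k)}(2T)$,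 $k=0,\dots,2n-1$; $X_{N,2T}$: $u^{(2k+1)}(0)=u^{(2k+1)}(2T)=0$; $X_{D,2T}$: $u^{(2k)}(0)=u^{(2k)}(2T)=0$ (in $W^{2n,1}(J)$); $X_{P,4T}$: $u^{(k)}(0)=u^{(k)}(4T)$, $k=0,\dots,2n-1$. $\Lambda_N[T],\Lambda_D[T],\Lambda_{M_1}[T],\Lambda_{M_2}[T]$ are the eigenvalue sets of $L$ on $X_{N,T},X_{D,T},X_{M_1,T},X_{M_2,T}$; $\Lambda_P[2T],\Lambda_A[2T],\Lambda_N[2T],\Lambda_D[2T]$ those of $\widetilde L$ on $X_{P,2T},X_{A,2T},X_{N,2T},X_{D,2T}$; $\Lambda_P[4T]$ that of $\widetilde{\widetilde L}$ on $X_{P,4T}$. *)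

(* Defs.v *)
From Stdlib Require Import Reals Lra Lia.
Open Scope R_scope.

Fixpoint rsum (f : nat -> R) (m : nat) : R :=
  match m with O => 0 | S p => rsum f p + f p end.

(* derivative of f at x relative to the closed interval [a,b]
   (one-sided at the endpoints) *)
Definition deriv_within (a b : R) (f : R -> R) (x l : R) : Prop :=
  forall eps, 0 < eps -> exists delta, 0 < delta /\
    forall h, h <> 0 -> Rabs h < delta -> a <= x + h <= b ->
      Rabs ((f (x + h) - f x) / h - l) < eps.

Definition abs_cont (a b : R) (f : R -> R) : Prop :=
  forall eps, 0 < eps -> exists delta, 0 < delta /\
    forall (m : nat) (x y : nat -> R),
      (forall i, (i < m)%nat -> a <= x i <= y i /\ y i <= b) ->
      (forall i, (S i < m)%nat -> y i <= x (S i)) ->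
      rsum (fun i => y i - x i) m < delta ->
      rsum (fun i => Rabs (f (y i) - f (x i))) m < eps.

Definition negligible (N : R -> Prop) : Prop :=
  forall eps, 0 < eps -> exists (c l : nat -> R),
    (forall i, 0 <= l i) /\
    (forall x, N x -> exists i, c i <= x <= c i + l i) /\
    (forall m, rsum l m <= eps).

Definition ae_on (a b : R) (P : R -> Prop) : Prop :=
  exists N, negligible N /\ forall t, a <= t <= b -> ~ N t -> P t.

(* f in L^1(a,b): characterized (Lebesgue) as the a.e. derivative of an
   absolutely continuous function on [a,b] *)
Definition L1 (a b : R) (f : R -> R) : Prop :=
  exists F, abs_cont a b F /\
    ae_on a b (fun t => deriv_within a b F t (f t)).

(* d is the family of derivatives (d k = u^(k)) of a function u = d 0 in
   W^{2n,1}(a,b): u in C^{2n-1}[a,b], u^(2n-1) absolutely continuous *)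
Definition W2n1 (n : nat) (a b : R) (d : nat -> R -> R) : Prop :=
  (forall k, (k < 2 * n - 1)%nat -> forall x, a <= x <= b ->
     deriv_within a b (d k) x (d (S k) x)) /\
  abs_cont a b (d (2 * n - 1)%nat).

(* u is an eigenfunction with eigenvalue lam of the operator
   M u = u^(2n) + sum_{k<2n} c_k u^(k) on [0,b] with boundary conditions bc
   (bc is a condition on the derivative family) *)
Definition eigfun (n : nat) (b : R) (c : nat -> R -> R)
  (bc : (nat -> R -> R) -> Prop) (lam : R) (u : R -> R) : Prop :=
  exists d : nat -> R -> R,
    (forall t, 0 <= t <= b -> d O t = u t) /\
    W2n1 n 0 b d /\ bc d /\
    (exists t, 0 <= t <= b /\ u t <> 0) /\
    ae_on 0 b (fun t => exists v,
       deriv_within 0 b (d (2 * n - 1)%nat) t v /\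
       v + rsum (fun k => c k t * d k t) (2 * n) + lam * u t = 0).

Definition eigval n b c bc (lam : R) : Prop := exists u, eigfun n b c bc lam u.

Definition first_eig n b c bc (lam0 : R) : Prop :=
  eigval n b c bc lam0 /\
  (forall mu, eigval n b c bc mu -> lam0 <= mu) /\
  exists u0, eigfun n b c bc lam0 u0 /\
    ((forall t, 0 <= t <= b -> 0 <= u0 t) \/
     (forall t, 0 <= t <= b -> u0 t <= 0)) /\
    (forall u, eigfun n b c bc lam0 u ->
       exists alpha, forall t, 0 <= t <= b -> u t = alpha * u0 t).

Definition bc_N n b (d : nat -> R -> R) : Prop :=
  forall k, (k < n)%nat -> d (2*k+1)%nat 0 = 0 /\ d (2*k+1)%nat b = 0.
Definition bc_D n b (d : nat -> R -> R) : Prop :=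
  forall k, (k < n)%nat -> d (2*k)%nat 0 = 0 /\ d (2*k)%nat b = 0.
Definition bc_M1 n b (d : nat -> R -> R) : Prop :=
  forall k, (k < n)%nat -> d (2*k+1)%nat 0 = 0 /\ d (2*k)%nat b = 0.
Definition bc_M2 n b (d : nat -> R -> R) : Prop :=
  forall k, (k < n)%nat -> d (2*k)%nat 0 = 0 /\ d (2*k+1)%nat b = 0.
Definition bc_P n b (d : nat -> R -> R) : Prop :=
  forall k, (k < 2 * n)%nat -> d k 0 = d k b.
Definition bc_A n b (d : nat -> R -> R) : Prop :=
  forall k, (k < 2 * n)%nat -> d k 0 = - d k b.

Definition refl_coef (T : R) (c : nat -> R -> R) (k : nat) (t : R) : R :=
  if Rle_dec t T then c k t
  else if Nat.even k then c k (2 * T - t) else - c k (2 * T - t).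

(* Main.v *)
Require Import Defs.
From Stdlib Require Import Reals Lra Lia.
Open Scope R_scope.


Lemma rsum_ext f g m : (forall i, (i < m)%nat -> f i = g i) -> rsum f m = rsum g m.
Proof. induction m; simpl; intros H; auto. rewrite IHm by (intros; apply H; lia). rewrite H by lia. auto. Qed.

Lemma rsum_le f g m : (forall i, (i < m)%nat -> f i <= g i) -> rsum f m <= rsum g m.
Proof. induction m; simpl; intros H; [lra|]. assert (H1 := H m ltac:(lia)). assert (rsum f m <= rsum g m) by (apply IHm; intros; apply H; lia). lra. Qed.

Lemma rsum_plus f g m : rsum (fun i => f i + g i) m = rsum f m + rsum g m.
Proof. induction m; simpl; [lra|]. rewrite IHm; ring. Qed.

Lemma rsum_scal s f m : rsum (fun i => s * f i) m = s * rsum f m.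
Proof. induction m; simpl; [lra|]. rewrite IHm; ring. Qed.

Lemma rsum_shift h m : rsum h (S m) = h O + rsum (fun j => h (S j)) m.
Proof. induction m; simpl in *; [lra|]. rewrite IHm. ring. Qed.

Lemma rsum_rev m : forall h, rsum (fun i => h (m - 1 - i)%nat) m = rsum h m.
Proof.
  induction m; intros h; [reflexivity|].
  change (rsum (fun i => h (S m - 1 - i)%nat) m + h (S m - 1 - m)%nat = rsum h (S m)).
  rewrite rsum_shift.
  replace (S m - 1 - m)%nat with O by lia.
  rewrite (rsum_ext (fun i => h (S m - 1 - i)%nat) (fun i => (fun j => h (S j)) (m - 1 - i)%nat)).
  - rewrite (IHm (fun j => h (S j))). ring.
  - intros i Hi. f_equal. lia.
Qed.

Lemma rsum_nonneg_mono l m m' : (forall i, 0 <= l i) -> (m <= m')%nat -> rsum l m <= rsum l m'.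
Proof. intros H Hm. induction Hm; [lra|]. simpl. specialize (H m0). lra. Qed.

Lemma pow_m1 k : (-1)^k = if Nat.even k then 1 else -1.
Proof.
  induction k; [reflexivity|]. simpl pow. rewrite IHk. rewrite Nat.even_succ, <- Nat.negb_even.
  destruct (Nat.even k); simpl; lra.
Qed.

Lemma pow_m1_sq k : (-1)^k * (-1)^k = 1.
Proof. rewrite pow_m1. destruct (Nat.even k); lra. Qed.

Lemma pow_m1_abs k : Rabs ((-1)^k) = 1.
Proof. rewrite pow_m1. destruct (Nat.even k); [apply Rabs_R1| rewrite Rabs_left; lra]. Qed.

Lemma pow_even k : (-1)^(2*k) = 1.
Proof. apply pow_1_even. Qed.
Lemma pow_odd k : (-1)^(2*k+1) = -1.
Proof. rewrite Nat.add_1_r. apply pow_1_odd. Qed.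
Lemma pow_top n : (1 <= n)%nat -> (-1)^(2*n-1) = -1.
Proof. intros. replace (2*n-1)%nat with (2*(n-1)+1)%nat by lia. apply pow_odd. Qed.

Lemma negl_single p : negligible (fun t => t = p).
Proof.
  intros eps He. exists (fun _ => p), (fun _ => 0). split; [intros; lra|]. split.
  - intros x ->. exists O. lra.
  - intros m. induction m; simpl; lra.
Qed.

Lemma negl_refl N p : negligible N -> negligible (fun t => N (p - t)).
Proof.
  intros H eps He. destruct (H eps He) as (c & l & H1 & H2 & H3).
  exists (fun i => p - c i - l i), l. split; auto. split; auto.
  intros x Hx. destruct (H2 _ Hx) as [i Hi]. exists i. lra.
Qed.

Definition ilv (f g : nat -> R) (i : nat) : R := if Nat.even i then f (Nat.div2 i) else g (Nat.div2 i).

Lemma ilv_even f g i : ilv f g (2*i) = f i.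
Proof. unfold ilv. rewrite Nat.even_mul. simpl Nat.even. rewrite Nat.div2_double. reflexivity. Qed.
Lemma ilv_odd f g i : ilv f g (S (2*i)) = g i.
Proof. unfold ilv. rewrite Nat.div2_succ_double. rewrite Nat.even_succ, <- Nat.negb_even, Nat.even_mul. reflexivity. Qed.

Lemma ilv_sum f g m : rsum (ilv f g) (2*m) = rsum f m + rsum g m.
Proof.
  induction m; [simpl; lra|].
  replace (2 * S m)%nat with (S (S (2*m))) by lia. change (rsum (ilv f g) (2*m) + ilv f g (2*m) + ilv f g (S (2*m)) = rsum f m + f m + (rsum g m + g m)). rewrite IHm, ilv_even, ilv_odd. ring.
Qed.

Lemma negl_union N1 N2 : negligible N1 -> negligible N2 -> negligible (fun t => N1 t \/ N2 t).
Proof.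
  intros H1 H2 eps He.
  destruct (H1 (eps/2) ltac:(lra)) as (c1 & l1 & A1 & B1 & C1).
  destruct (H2 (eps/2) ltac:(lra)) as (c2 & l2 & A2 & B2 & C2).
  exists (ilv c1 c2), (ilv l1 l2). split; [|split].
  - intros i; unfold ilv; destruct (Nat.even i); auto.
  - intros x [Hx|Hx].
    + destruct (B1 _ Hx) as [i Hi]. exists (2*i)%nat. rewrite !ilv_even. auto.
    + destruct (B2 _ Hx) as [i Hi]. exists (S (2*i))%nat. rewrite !ilv_odd. auto.
  - intros m. apply Rle_trans with (rsum (ilv l1 l2) (2*m)).
    + apply rsum_nonneg_mono; [|lia]. intros i; unfold ilv; destruct (Nat.even i); auto.
    + rewrite ilv_sum. specialize (C1 m). specialize (C2 m). lra.
Qed.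


Lemma deriv_refl a b f x l p :
  deriv_within a b f x l ->
  deriv_within (2*p - b) (2*p - a) (fun t => f (2*p - t)) (2*p - x) (- l).
Proof.
  intros H eps He. destruct (H eps He) as (d & Hd & H1). exists d. split; auto.
  intros h Hh Ha Hin.
  replace (2*p - (2*p - x + h)) with (x + -h) by ring.
  replace (2*p - (2*p - x)) with x by ring.
  assert (E: (f (x + -h) - f x)/h - - l = - ((f (x + -h) - f x)/ -h - l)) by (field; auto).
  rewrite E, Rabs_Ropp. apply H1.
  - lra.
  - rewrite Rabs_Ropp; auto.
  - lra.
Qed.

Lemma deriv_scal a b f x l s :
  deriv_within a b f x l -> deriv_within a b (fun t => s * f t) x (s * l).
Proof.
  intros H eps He.
  assert (Hs: 0 <= Rabs s) by apply Rabs_pos.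
  destruct (H (eps / (Rabs s + 1))) as (d & Hd & H1).
  { apply Rdiv_lt_0_compat; lra. }
  exists d. split; auto. intros h Hh Ha Hin.
  replace ((s * f (x + h) - s * f x) / h - s * l) with (s * ((f (x+h) - f x)/h - l)) by (field; auto).
  rewrite Rabs_mult. specialize (H1 h Hh Ha Hin).
  set (q := Rabs ((f (x + h) - f x) / h - l)) in *.
  assert (Hq : 0 <= q) by apply Rabs_pos.
  assert (q * (Rabs s + 1) < eps).
  { apply (Rmult_lt_compat_r (Rabs s + 1)) in H1; [|lra].
    unfold Rdiv in H1. rewrite Rmult_assoc, Rinv_l in H1; lra. }
  nra.
Qed.

Lemma deriv_ext a b f g x l :
  (forall t, a <= t <= b -> f t = g t) -> a <= x <= b ->
  deriv_within a b f x l -> deriv_within a b g x l.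
Proof.
  intros E Hx H eps He. destruct (H eps He) as (d & Hd & H1). exists d. split; auto.
  intros h Hh Ha Hin. rewrite <- (E (x+h)), <- (E x) by lra. auto.
Qed.

Lemma deriv_sub a b a' b' f x l :
  deriv_within a b f x l -> a <= a' -> b' <= b -> deriv_within a' b' f x l.
Proof.
  intros H H1 H2 eps He. destruct (H eps He) as (d & Hd & H3). exists d. split; auto.
  intros h Hh Ha Hin. apply H3; auto; lra.
Qed.

Lemma deriv_sup_left a b c f x l :
  x < b -> deriv_within a b f x l -> deriv_within a c f x l.
Proof.
  intros Hx H eps He. destruct (H eps He) as (d & Hd & H3). exists (Rmin d (b - x)).
  split. { apply Rmin_glb_lt; lra. }
  intros h Hh Ha Hin. apply H3; auto.
  - apply Rlt_le_trans with (1 := Ha). apply Rmin_l.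
  - assert (Rabs h < b - x) by (apply Rlt_le_trans with (1 := Ha); apply Rmin_r).
    apply Rabs_def2 in H0. lra.
Qed.

Lemma deriv_sup_right a b c f x l :
  a < x -> deriv_within a b f x l -> deriv_within c b f x l.
Proof.
  intros Hx H eps He. destruct (H eps He) as (d & Hd & H3). exists (Rmin d (x - a)).
  split. { apply Rmin_glb_lt; lra. }
  intros h Hh Ha Hin. apply H3; auto.
  - apply Rlt_le_trans with (1 := Ha). apply Rmin_l.
  - assert (Rabs h < x - a) by (apply Rlt_le_trans with (1 := Ha); apply Rmin_r).
    apply Rabs_def2 in H0. lra.
Qed.

Lemma deriv_glue a b c f l :
  deriv_within a b f b l -> deriv_within b c f b l -> deriv_within a c f b l.
Proof.
  intros H1 H2 eps He. destruct (H1 eps He) as (d1 & Hd1 & G1).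
  destruct (H2 eps He) as (d2 & Hd2 & G2). exists (Rmin d1 d2).
  split. { apply Rmin_glb_lt; lra. }
  intros h Hh Ha Hin.
  assert (Rabs h < d1) by (apply Rlt_le_trans with (1 := Ha); apply Rmin_l).
  assert (Rabs h < d2) by (apply Rlt_le_trans with (1 := Ha); apply Rmin_r).
  destruct (Rle_dec h 0).
  - apply G1; auto; lra.
  - apply G2; auto; lra.
Qed.

Lemma deriv_unique a b f x l1 l2 :
  a < b -> a <= x <= b -> deriv_within a b f x l1 -> deriv_within a b f x l2 -> l1 = l2.
Proof.
  intros Hab Hx H1 H2. destruct (Req_dec l1 l2) as [|Hne]; auto. exfalso.
  assert (Hne' : l1 - l2 <> 0) by lra.
  set (e := Rabs (l1 - l2) / 2).
  assert (He : 0 < e) by (unfold e; apply Rabs_pos_lt in Hne'; lra).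
  destruct (H1 e He) as (d1 & Hd1 & G1). destruct (H2 e He) as (d2 & Hd2 & G2).
  set (m := Rmin (Rmin d1 d2) (b - a)).
  assert (Hm : 0 < m) by (unfold m; repeat apply Rmin_glb_lt; lra).
  assert (m <= d1) by (unfold m; eapply Rle_trans; [apply Rmin_l| apply Rmin_l]).
  assert (m <= d2) by (unfold m; eapply Rle_trans; [apply Rmin_l| apply Rmin_r]).
  assert (m <= b - a) by (unfold m; apply Rmin_r).
  set (h := if Rle_dec (x + m/2) b then m/2 else - (m/2)).
  assert (Hh : h <> 0 /\ Rabs h < m /\ a <= x + h <= b).
  { unfold h; destruct (Rle_dec (x + m/2) b).
    - rewrite Rabs_right by lra. repeat split; lra.
    - rewrite Rabs_left by lra. repeat split; lra. }
  destruct Hh as (Hh1 & Hh2 & Hh3).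
  specialize (G1 h Hh1 ltac:(lra) Hh3). specialize (G2 h Hh1 ltac:(lra) Hh3).
  set (q := (f (x + h) - f x) / h) in *.
  assert (Rabs (l1 - l2) <= Rabs (q - l2) + Rabs (q - l1)).
  { replace (l1 - l2) with ((q - l2) - (q - l1)) by ring. apply Rabs_triang_inv2 || (eapply Rle_trans; [apply Rabs_triang|]; rewrite Rabs_Ropp; lra). }
  unfold e in *. lra.
Qed.


Lemma ac_ext a b f g : (forall t, a <= t <= b -> f t = g t) -> abs_cont a b f -> abs_cont a b g.
Proof.
  intros E H eps He. destruct (H eps He) as (d & Hd & H1). exists d. split; auto.
  intros m x y Hin Ho Hs.
  rewrite <- (rsum_ext (fun i => Rabs (f (y i) - f (x i)))).
  - apply H1; auto.
  - intros i Hi. destruct (Hin i Hi). rewrite !E by lra. auto.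
Qed.

Lemma ac_sub a b a' b' f : a <= a' -> b' <= b -> abs_cont a b f -> abs_cont a' b' f.
Proof.
  intros H1 H2 H eps He. destruct (H eps He) as (d & Hd & H3). exists d. split; auto.
  intros m x y Hin Ho Hs. apply H3; auto. intros i Hi. destruct (Hin i Hi). lra.
Qed.

Lemma ac_scal a b f s : abs_cont a b f -> abs_cont a b (fun t => s * f t).
Proof.
  intros H eps He.
  assert (Hs: 0 <= Rabs s) by apply Rabs_pos.
  destruct (H (eps / (Rabs s + 1))) as (d & Hd & H1).
  { apply Rdiv_lt_0_compat; lra. }
  exists d. split; auto. intros m x y Hin Ho Hsum.
  rewrite (rsum_ext _ (fun i => Rabs s * Rabs (f (y i) - f (x i)))).
  2:{ intros i _. rewrite <- Rabs_mult. f_equal. ring. }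
  rewrite rsum_scal. specialize (H1 m x y Hin Ho Hsum).
  set (q := rsum _ m) in *.
  assert (Hq : 0 <= q).
  { unfold q. apply Rle_trans with (rsum (fun _ => 0) m).
    - clear. induction m; simpl; lra.
    - apply rsum_le. intros; apply Rabs_pos. }
  assert (q * (Rabs s + 1) < eps).
  { apply (Rmult_lt_compat_r (Rabs s + 1)) in H1; [|lra].
    unfold Rdiv in H1. rewrite Rmult_assoc, Rinv_l in H1; lra. }
  nra.
Qed.

Lemma ac_refl a b f p : abs_cont a b f -> abs_cont (2*p - b) (2*p - a) (fun t => f (2*p - t)).
Proof.
  intros H eps He. destruct (H eps He) as (d & Hd & H1). exists d. split; auto.
  intros m x y Hin Ho Hs.
  set (x' := fun i => 2*p - y (m - 1 - i)%nat).
  set (y' := fun i => 2*p - x (m - 1 - i)%nat).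
  assert (R1 : rsum (fun i => Rabs (f (2*p - y i) - f (2*p - x i))) m
             = rsum (fun i => Rabs (f (y' i) - f (x' i))) m).
  { rewrite <- (rsum_rev m (fun i => Rabs (f (y' i) - f (x' i)))).
    apply rsum_ext. intros i Hi. unfold x', y'.
    replace (m - 1 - (m - 1 - i))%nat with i by lia.
    rewrite Rabs_minus_sym. reflexivity. }
  rewrite R1. apply H1.
  - intros i Hi. unfold x', y'. destruct (Hin (m - 1 - i)%nat ltac:(lia)). lra.
  - intros i Hi. unfold x', y'.
    assert (Ho' := Ho (m - 1 - S i)%nat ltac:(lia)).
    replace (S (m - 1 - S i)) with (m - 1 - i)%nat in Ho' by lia. lra.
  - rewrite <- (rsum_rev m (fun i => y' i - x' i)).
    rewrite (rsum_ext _ (fun i => y i - x i)); auto.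
    intros i Hi. unfold x', y'. replace (m - 1 - (m - 1 - i))%nat with i by lia. ring.
Qed.

Lemma ac_glue a b c f : a <= b -> b <= c -> abs_cont a b f -> abs_cont b c f -> abs_cont a c f.
Proof.
  intros Hab Hbc H1 H2 eps He.
  destruct (H1 (eps/2) ltac:(lra)) as (d1 & Hd1 & G1).
  destruct (H2 (eps/2) ltac:(lra)) as (d2 & Hd2 & G2).
  exists (Rmin d1 d2). split. { apply Rmin_glb_lt; lra. }
  intros m x y Hin Ho Hs.
  assert (Hd1' : Rmin d1 d2 <= d1) by apply Rmin_l.
  assert (Hd2' : Rmin d1 d2 <= d2) by apply Rmin_r.
  set (xL := fun i => Rmin (x i) b). set (yL := fun i => Rmin (y i) b).
  set (xR := fun i => Rmax (x i) b). set (yR := fun i => Rmax (y i) b).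
  assert (A1 : rsum (fun i => Rabs (f (yL i) - f (xL i))) m < eps/2).
  { apply G1.
    - intros i Hi. destruct (Hin i Hi). unfold xL, yL.
      unfold Rmin; repeat destruct Rle_dec; lra.
    - intros i Hi. specialize (Ho i Hi). unfold xL, yL.
      unfold Rmin; repeat destruct Rle_dec; lra.
    - eapply Rle_lt_trans; [|apply Rlt_le_trans with (1 := Hs); auto].
      apply rsum_le. intros i Hi. destruct (Hin i Hi). unfold xL, yL.
      unfold Rmin; repeat destruct Rle_dec; lra. }
  assert (A2 : rsum (fun i => Rabs (f (yR i) - f (xR i))) m < eps/2).
  { apply G2.
    - intros i Hi. destruct (Hin i Hi). unfold xR, yR.
      unfold Rmax; repeat destruct Rle_dec; lra.
    - intros i Hi. specialize (Ho i Hi). unfold xR, yR.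
      unfold Rmax; repeat destruct Rle_dec; lra.
    - eapply Rle_lt_trans; [|apply Rlt_le_trans with (1 := Hs); auto].
      apply rsum_le. intros i Hi. destruct (Hin i Hi). unfold xR, yR.
      unfold Rmax; repeat destruct Rle_dec; lra. }
  apply Rle_lt_trans with (rsum (fun i => Rabs (f (yL i) - f (xL i)) + Rabs (f (yR i) - f (xR i))) m).
  2:{ rewrite rsum_plus. lra. }
  apply rsum_le. intros i Hi. destruct (Hin i Hi). unfold xL, yL, xR, yR.
  destruct (Rle_dec (y i) b).
  - rewrite (Rmin_left (y i)), (Rmin_left (x i)), (Rmax_right (y i)), (Rmax_right (x i)) by lra.
    replace (f b - f b) with 0 by ring. rewrite Rabs_R0. lra.
  - destruct (Rle_dec b (x i)).
    + rewrite (Rmin_right (y i)), (Rmin_right (x i)), (Rmax_left (y i)), (Rmax_left (x i)) by lra.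
      replace (f b - f b) with 0 by ring. rewrite Rabs_R0. lra.
    + rewrite (Rmin_right (y i)), (Rmin_left (x i)), (Rmax_left (y i)), (Rmax_right (x i)) by lra.
      replace (f (y i) - f (x i)) with ((f b - f (x i)) + (f (y i) - f b)) by ring.
      apply Rabs_triang.
Qed.


Definition reflF (p s : R) (d : nat -> R -> R) : nat -> R -> R :=
  fun k t => s * (-1)^k * d k (2*p - t).
Definition glue (p : R) (d e : nat -> R -> R) : nat -> R -> R :=
  fun k t => if Rle_dec t p then d k t else e k t.
Definition EqAt n a b (C : nat -> R -> R) lam (d : nat -> R -> R) t :=
  exists v, deriv_within a b (d (2*n-1)%nat) t v /\
    v + rsum (fun k => C k t * d k t) (2*n) + lam * d O t = 0.
Definition Sol n b C lam d := W2n1 n 0 b d /\ ae_on 0 b (EqAt n 0 b C lam d).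
Definition Sym p (C : nat -> R -> R) := forall k x, x <> p -> C k x = (-1)^k * C k (2*p - x).

Lemma sym_refl_coef p c : Sym p (refl_coef p c).
Proof.
  intros k x Hx. unfold refl_coef.
  destruct (Rle_dec x p); destruct (Rle_dec (2*p - x) p); try lra.
  - rewrite pow_m1. replace (2*p - (2*p - x)) with x by ring.
    destruct (Nat.even k); ring.
  - rewrite pow_m1. destruct (Nat.even k); ring.
Qed.

Lemma W_refl n a b a' b' p s d :
  W2n1 n a b d -> a' = 2*p - b -> b' = 2*p - a -> W2n1 n a' b' (reflF p s d).
Proof.
  intros [H1 H2] -> ->. split.
  - intros k Hk x Hx. unfold reflF.
    assert (D := H1 k Hk (2*p - x) ltac:(lra)).
    apply deriv_refl with (p := p) in D.
    replace (2*p - (2*p - x)) with x in D by ring.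
    apply deriv_scal with (s := s * (-1)^k) in D.
    replace (s * (-1) ^ S k * d (S k) (2 * p - x)) with (s * (-1)^k * - d (S k) (2*p - x)) by (simpl; ring).
    exact D.
  - unfold reflF. apply (ac_scal _ _ (fun t => d (2*n-1)%nat (2*p - t))). apply ac_refl. auto.
Qed.

Lemma glue_l p d e k t : t <= p -> glue p d e k t = d k t.
Proof. intros H. unfold glue. destruct (Rle_dec t p); lra || auto. Qed.
Lemma glue_r p d e k t : p < t -> glue p d e k t = e k t.
Proof. intros H. unfold glue. destruct (Rle_dec t p); auto; lra. Qed.
Lemma glue_r' p d e k t : p <= t -> d k p = e k p -> glue p d e k t = e k t.
Proof. intros H E. unfold glue. destruct (Rle_dec t p); auto. replace t with p by lra. auto. Qed.

Lemma W_glue n a b c d e :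
  (1 <= n)%nat -> a <= b <= c -> W2n1 n a b d -> W2n1 n b c e ->
  (forall k, (k < 2*n)%nat -> d k b = e k b) -> W2n1 n a c (glue b d e).
Proof.
  intros Hn Hb [D1 D2] [E1 E2] Hc. split.
  - intros k Hk x Hx.
    assert (HL : a <= x <= b -> deriv_within a b (glue b d e k) x (glue b d e (S k) x)).
    { intros Hx'. rewrite glue_l by lra. apply deriv_ext with (f := d k); auto.
      intros t Ht. rewrite glue_l by lra. auto. }
    assert (HR : b <= x <= c -> deriv_within b c (glue b d e k) x (glue b d e (S k) x)).
    { intros Hx'. rewrite glue_r' by (try lra; apply Hc; lia). apply deriv_ext with (f := e k); auto.
      intros t Ht. rewrite glue_r'; auto; try lra. apply Hc; lia. }
    destruct (Rtotal_order x b) as [Hl|[He|Hr]].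
    + apply deriv_sup_left with b; auto. apply HL; lra.
    + subst x. apply deriv_glue; [apply HL| apply HR]; lra.
    + apply deriv_sup_right with b; [lra|]. apply HR; lra.
  - apply ac_glue with b; try lra.
    + apply ac_ext with (d (2*n-1)%nat); auto. intros t Ht. rewrite glue_l; lra || auto.
    + apply ac_ext with (e (2*n-1)%nat); auto. intros t Ht. rewrite glue_r'; auto; try lra. apply Hc; lia.
Qed.

Lemma EqAt_transfer n a b a' b' C C' lam d d' t :
  (1 <= n)%nat -> EqAt n a b C lam d t ->
  (forall k, (k < 2*n)%nat -> C' k t = C k t) ->
  (forall k, (k < 2*n)%nat -> d' k t = d k t) ->
  (forall v, deriv_within a b (d (2*n-1)%nat) t v -> deriv_within a' b' (d' (2*n-1)%nat) t v) ->
  EqAt n a' b' C' lam d' t.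
Proof.
  intros Hn (v & Hv & E) HC Hd HD. exists v. split; auto.
  rewrite (rsum_ext _ (fun k => C k t * d k t)).
  - rewrite Hd by lia. auto.
  - intros k Hk. rewrite HC, Hd; auto.
Qed.

Lemma Eq_refl n a b C lam d t p s :
  (1 <= n)%nat -> Sym p C -> t <> p -> EqAt n a b C lam d t ->
  EqAt n (2*p - b) (2*p - a) C lam (reflF p s d) (2*p - t).
Proof.
  intros Hn HS Ht (v & Hv & E). exists (s * v). split.
  - unfold reflF. apply deriv_refl with (p := p) in Hv.
    apply deriv_scal with (s := s * (-1)^(2*n-1)) in Hv.
    replace (s * v) with (s * (-1)^(2*n-1) * - v) by (rewrite pow_top by auto; ring). exact Hv.
  - unfold reflF. replace (2*p - (2*p - t)) with t by ring.
    rewrite (rsum_ext _ (fun k => s * (C k t * d k t))).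
    + rewrite rsum_scal. simpl pow. replace (s * v + s * rsum (fun k => C k t * d k t) (2 * n) + lam * (s * 1 * d 0%nat t)) with (s * (v + rsum (fun k => C k t * d k t) (2 * n) + lam * d 0%nat t)) by ring.
      rewrite E. ring.
    + intros k Hk. rewrite (HS k (2*p - t)) by lra. replace (2*p - (2*p - t)) with t by ring.
      replace ((-1) ^ k * C k t * (s * (-1) ^ k * d k t)) with (((-1)^k * (-1)^k) * (s * (C k t * d k t))) by ring.
      rewrite pow_m1_sq. ring.
Qed.


Lemma Sol_refl n p C lam d s :
  (1 <= n)%nat -> Sym p C -> Sol n (2*p) C lam d -> Sol n (2*p) C lam (reflF p s d).
Proof.
  intros Hn HS [HW (N & HN & HE)]. split.
  - apply (W_refl _ _ _ 0 (2*p) p s) in HW; auto; ring.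
  - exists (fun t => N (2*p - t) \/ t = p). split.
    + apply negl_union; [apply negl_refl; auto| apply negl_single].
    + intros t Ht HNt.
      assert (Q := HE (2*p - t) ltac:(lra) ltac:(tauto)).
      apply (Eq_refl _ _ _ _ _ _ _ p s) in Q; auto; [|lra].
      replace (2*p - (2*p - t)) with t in Q by ring.
      replace (2*p - 2*p) with 0 in Q by ring. replace (2*p - 0) with (2*p) in Q by ring. auto.
Qed.

Lemma Sol_ext n p c lam d s :
  (1 <= n)%nat -> 0 < p -> Sol n p c lam d ->
  (forall k, (k < 2*n)%nat -> d k p = s * (-1)^k * d k p) ->
  Sol n (2*p) (refl_coef p c) lam (glue p d (reflF p s d)).
Proof.
  intros Hn Hp [HW (N & HN & HE)] Hc.
  assert (Hc' : forall k, (k < 2*n)%nat -> d k p = reflF p s d k p).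
  { intros k Hk. unfold reflF. replace (2*p - p) with p by ring. auto. }
  split.
  - apply W_glue with (b := p); auto; [lra|].
    apply (W_refl _ 0 p); auto; ring.
  - exists (fun t => N t \/ N (2*p - t) \/ t = p). split.
    + apply negl_union; auto. apply negl_union; [apply negl_refl; auto| apply negl_single].
    + intros t Ht HNt. destruct (Rtotal_order t p) as [Hl|[He|Hr]]; [| tauto |].
      * apply EqAt_transfer with (a := 0) (b := p) (C := c) (d := d); auto.
        -- apply HE; [lra|tauto].
        -- intros k _. unfold refl_coef. destruct (Rle_dec t p); auto; lra.
        -- intros k _. apply glue_l; lra.
        -- intros v Hv. apply deriv_sup_left with p; auto.
           apply deriv_ext with (d (2*n-1)%nat); auto; [|lra].
           intros x Hx. rewrite glue_l; lra || auto.
      * assert (Q := HE (2*p - t) ltac:(lra) ltac:(tauto)).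
        assert (Q' : EqAt n 0 p (refl_coef p c) lam d (2*p - t)).
        { apply EqAt_transfer with (a := 0) (b := p) (C := c) (d := d); auto.
          intros k _. unfold refl_coef. destruct (Rle_dec (2*p - t) p); auto; lra. }
        apply (Eq_refl _ _ _ _ _ _ _ p s) in Q'; auto; [|apply sym_refl_coef|lra].
        replace (2*p - (2*p - t)) with t in Q' by ring.
        replace (2*p - p) with p in Q' by ring. replace (2*p - 0) with (2*p) in Q' by ring.
        apply EqAt_transfer with (a := p) (b := 2*p) (C := refl_coef p c) (d := reflF p s d); auto.
        -- intros k _. apply glue_r; lra.
        -- intros v Hv. apply deriv_sup_right with p; auto.
           apply deriv_ext with (reflF p s d (2*n-1)%nat); auto; [|lra].
           intros x Hx. rewrite glue_r'; auto; try lra. apply Hc'; lia.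
Qed.

Lemma Sol_restr n p c lam d :
  0 < p -> Sol n (2*p) (refl_coef p c) lam d -> Sol n p c lam d.
Proof.
  intros Hp [[W1 W2] (N & HN & HE)]. split.
  - split.
    + intros k Hk x Hx. apply deriv_sub with 0 (2*p); try lra. apply W1; auto; lra.
    + apply ac_sub with 0 (2*p); auto; lra.
  - exists N. split; auto. intros t Ht HNt.
    destruct (HE t ltac:(lra) HNt) as (v & Hv & E). exists v. split.
    + apply deriv_sub with 0 (2*p); auto; lra.
    + rewrite <- E. f_equal. f_equal. apply rsum_ext. intros k _.
      unfold refl_coef. destruct (Rle_dec t p); auto; lra.
Qed.


Lemma eig_to_sol n b C bc lam u : eigfun n b C bc lam u ->
  exists d, (forall t, 0 <= t <= b -> d O t = u t) /\ Sol n b C lam d /\ bc d /\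
    (exists t, 0 <= t <= b /\ d O t <> 0).
Proof.
  intros (d & Hu & W & Hbc & (t & Ht & Hnz) & (N & HN & HE)).
  exists d. split; auto. split; [split; auto|]. 
  - exists N. split; auto. intros s Hs HNs. destruct (HE s Hs HNs) as (v & Hv & E).
    exists v. split; auto. rewrite Hu; auto.
  - split; auto. exists t. rewrite Hu; auto.
Qed.

Lemma sol_to_eig n b C bc lam d : Sol n b C lam d -> bc d -> (exists t, 0 <= t <= b /\ d O t <> 0) ->
  eigfun n b C bc lam (d O).
Proof.
  intros [W (N & HN & HE)] Hbc Hnz. exists d. split; [auto|]. split; auto. split; auto. split; auto.
  exists N. split; auto.
Qed.

Lemma first_le n b C bc lam lam' d : first_eig n b C bc lam -> Sol n b C lam' d -> bc d ->
  (exists t, 0 <= t <= b /\ d O t <> 0) -> lam <= lam'.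
Proof.
  intros (_ & H & _) HS Hbc Hnz. apply H. exists (d O). apply sol_to_eig; auto.
Qed.

Lemma no_antisym n B C bc lam w : first_eig n B C bc lam -> eigfun n B C bc lam w ->
  (forall t, 0 <= t <= B -> w (B - t) = - w t) -> False.
Proof.
  intros (_ & _ & u0 & Heig & Hsign & Hsimp) Hw Hanti.
  destruct (Hsimp w Hw) as [al Hal].
  destruct Hw as (d & _ & _ & _ & (t1 & Ht1 & Hnz) & _).
  assert (E1 := Hal t1 Ht1). assert (E2 := Hal (B - t1) ltac:(lra)).
  rewrite Hanti in E2 by auto.
  assert (Hs : 0 <= u0 t1 * u0 (B - t1)).
  { destruct Hsign as [Hs|Hs].
    - apply Rmult_le_pos; apply Hs; lra.
    - assert (u0 t1 <= 0) by (apply Hs; lra). assert (u0 (B - t1) <= 0) by (apply Hs; lra). nra. }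
  assert (w t1 * w t1 = - (al * al) * (u0 t1 * u0 (B - t1))).
  { rewrite E1 at 1. replace (w t1) with (- (al * u0 (B - t1))) by lra. ring. }
  assert (0 <= al * al) by nra.
  assert (w t1 * w t1 <= 0) by nra.
  apply Hnz. nra.
Qed.

Lemma first_sym n p C bc lam : (1 <= n)%nat -> 0 < p -> Sym p C ->
  (forall d, bc d -> bc (reflF p 1 d)) -> first_eig n (2*p) C bc lam ->
  exists d, Sol n (2*p) C lam d /\ bc d /\ (exists t, 0 <= t <= 2*p /\ d O t <> 0) /\
    forall k t, (k < 2*n)%nat -> 0 <= t <= 2*p -> d k t = (-1)^k * d k (2*p - t).
Proof.
  intros Hn Hp HSym Hcl (_ & _ & u0 & Heig & Hsign & Hsimp).
  destruct (eig_to_sol _ _ _ _ _ _ Heig) as (d & Hdu & HS & Hbc & (t0 & Ht0 & Hnz)).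
  set (r := reflF p 1 d).
  assert (HSr : Sol n (2*p) C lam r) by (apply Sol_refl; auto).
  assert (Hr0 : forall t, r O t = d O (2*p - t)) by (intros; unfold r, reflF; simpl; ring).
  assert (Hnzr : exists t, 0 <= t <= 2*p /\ r O t <> 0).
  { exists (2*p - t0). split; [lra|]. rewrite Hr0. replace (2*p - (2*p - t0)) with t0 by ring. auto. }
  destruct (Hsimp (r O) (sol_to_eig _ _ _ _ _ _ HSr (Hcl _ Hbc) Hnzr)) as [al Hal].
  assert (Hal' : forall t, 0 <= t <= 2*p -> d O (2*p - t) = al * d O t).
  { intros t Ht. rewrite <- Hr0, Hal, Hdu; auto. }
  assert (Hsq : al * al = 1).
  { assert (A1 := Hal' t0 Ht0). assert (A2 := Hal' (2*p - t0) ltac:(lra)).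
    replace (2*p - (2*p - t0)) with t0 in A2 by ring. rewrite A1 in A2.
    apply (Rmult_eq_reg_r (d O t0)); auto. lra. }
  assert (Hal1 : al = 1).
  { destruct (Req_dec al (-1)) as [Hm|Hm]; [|nra]. exfalso.
    assert (A1 := Hal' t0 Ht0). rewrite Hm in A1.
    assert (S1 : u0 t0 = d O t0) by (symmetry; auto).
    assert (S2 : u0 (2*p - t0) = d O (2*p - t0)) by (symmetry; apply Hdu; lra).
    destruct Hsign as [Hs|Hs].
    - assert (0 <= u0 t0) by (apply Hs; lra). assert (0 <= u0 (2*p - t0)) by (apply Hs; lra). lra.
    - assert (u0 t0 <= 0) by (apply Hs; lra). assert (u0 (2*p - t0) <= 0) by (apply Hs; lra). lra. }
  subst al.
  assert (Heq : forall k, (k < 2*n)%nat -> forall t, 0 <= t <= 2*p -> d k t = r k t).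
  { induction k; intros Hk t Ht.
    - rewrite Hr0, Hal'; auto. ring.
    - assert (IH := IHk ltac:(lia)).
      destruct HS as [[W1 _] _]. destruct HSr as [[W1r _] _].
      assert (D1 := W1 k ltac:(lia) t Ht). assert (D2 := W1r k ltac:(lia) t Ht).
      apply (deriv_ext _ _ _ (d k)) in D2; auto; [|intros; symmetry; auto].
      apply (deriv_unique 0 (2*p) (d k) t); auto. lra. }
  exists d. split; auto. split; auto. split; [exists t0; auto|].
  intros k t Hk Ht. rewrite Heq; auto. unfold r, reflF. ring.
Qed.

Lemma glue_sym0 p d s t : 0 < p -> s * s = 1 -> d O p = s * d O p -> 0 <= t <= 2*p ->
  glue p d (reflF p s d) O (2*p - t) = s * glue p d (reflF p s d) O t.
Proof.
  intros Hp Hs Hc Ht. unfold glue, reflF. simpl pow.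
  destruct (Rle_dec t p); destruct (Rle_dec (2*p - t) p).
  - replace t with p by lra. replace (2*p - p) with p by ring. auto.
  - replace (2*p - (2*p - t)) with t by ring. ring.
  - replace (s * (s * 1 * d 0%nat (2 * p - t))) with ((s*s) * d 0%nat (2 * p - t)) by ring. rewrite Hs. ring.
  - lra.
Qed.

Lemma parity k n : (k < 2*n)%nat -> (exists j, (j < n)%nat /\ k = (2*j)%nat) \/ (exists j, (j < n)%nat /\ k = (2*j+1)%nat).
Proof.
  intros H. destruct (Nat.Even_or_Odd k) as [[j Hj]|[j Hj]]; [left|right]; exists j; split; lia.
Qed.

Lemma glue_0 p d e k : 0 < p -> glue p d e k 0 = d k 0.
Proof. intros. apply glue_l. lra. Qed.
Lemma glue_2p p d s k : 0 < p -> glue p d (reflF p s d) k (2*p) = s * (-1)^k * d k 0.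
Proof. intros. rewrite glue_r by lra. unfold reflF. replace (2*p - 2*p) with 0 by ring. auto. Qed.
Lemma reflF_0 p s d k : reflF p s d k 0 = s * (-1)^k * d k (2*p).
Proof. unfold reflF. replace (2*p - 0) with (2*p) by ring. auto. Qed.
Lemma reflF_2p p s d k : reflF p s d k (2*p) = s * (-1)^k * d k 0.
Proof. unfold reflF. replace (2*p - 2*p) with 0 by ring. auto. Qed.

Lemma ext_nz p d e : 0 < p -> (exists t, 0 <= t <= p /\ d O t <> 0) ->
  exists t, 0 <= t <= 2*p /\ glue p d e O t <> 0.
Proof. intros Hp (t & Ht & H). exists t. split; [lra|]. rewrite glue_l; lra || auto. Qed.

Lemma restr_nz n p d : (1 <= n)%nat -> 0 < p -> (exists t, 0 <= t <= 2*p /\ d O t <> 0) ->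
  (forall k t, (k < 2*n)%nat -> 0 <= t <= 2*p -> d k t = (-1)^k * d k (2*p - t)) ->
  exists t, 0 <= t <= p /\ d O t <> 0.
Proof.
  intros Hn Hp (t & Ht & H) Hs. destruct (Rle_dec t p).
  - exists t; split; auto; lra.
  - exists (2*p - t). split; [lra|]. rewrite Hs in H by (auto; lia). simpl in H. lra.
Qed.


Lemma ext_gen n p c bcY bc2 lY s : (1 <= n)%nat -> 0 < p -> first_eig n p c bcY lY ->
  (forall d, bcY d -> forall k, (k < 2*n)%nat -> d k p = s * (-1)^k * d k p) ->
  (forall d, bcY d -> bc2 (glue p d (reflF p s d))) ->
  exists d, Sol n (2*p) (refl_coef p c) lY (glue p d (reflF p s d)) /\ bc2 (glue p d (reflF p s d)) /\
    (exists t, 0 <= t <= 2*p /\ glue p d (reflF p s d) O t <> 0) /\ d O p = s * d O p.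
Proof.
  intros Hn Hp (Heig & _) Hc Hb. destruct Heig as [u Hu].
  destruct (eig_to_sol _ _ _ _ _ _ Hu) as (d & _ & HS & Hbc & Hnz).
  exists d. split; [apply Sol_ext; auto|]. split; auto. split; [apply ext_nz; auto|].
  rewrite (Hc d Hbc O) at 1 by lia. simpl. ring.
Qed.

Lemma ext_le n p c bcY bc2 lY l2 s : (1 <= n)%nat -> 0 < p -> first_eig n p c bcY lY ->
  first_eig n (2*p) (refl_coef p c) bc2 l2 ->
  (forall d, bcY d -> forall k, (k < 2*n)%nat -> d k p = s * (-1)^k * d k p) ->
  (forall d, bcY d -> bc2 (glue p d (reflF p s d))) -> l2 <= lY.
Proof.
  intros Hn Hp HY H2 Hc Hb. destruct (ext_gen _ _ _ _ _ _ _ Hn Hp HY Hc Hb) as (d & HS & Hbc & Hnz & _).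
  eapply first_le; eauto.
Qed.

Lemma ext_lt n p c bcY bc2 lY l2 : (1 <= n)%nat -> 0 < p -> first_eig n p c bcY lY ->
  first_eig n (2*p) (refl_coef p c) bc2 l2 ->
  (forall d, bcY d -> forall k, (k < 2*n)%nat -> d k p = -1 * (-1)^k * d k p) ->
  (forall d, bcY d -> bc2 (glue p d (reflF p (-1) d))) -> l2 < lY.
Proof.
  intros Hn Hp HY H2 Hc Hb. destruct (ext_gen _ _ _ _ _ _ _ Hn Hp HY Hc Hb) as (d & HS & Hbc & Hnz & Hc0).
  assert (Hle : l2 <= lY) by (eapply first_le; eauto).
  destruct Hle as [|E]; auto. exfalso. subst lY.
  apply (no_antisym _ _ _ _ _ _ H2 (sol_to_eig _ _ _ _ _ _ HS Hbc Hnz)).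
  intros t Ht. rewrite (glue_sym0 p d (-1) t); auto; lra.
Qed.

Lemma sym_le n p c bc2 bcY l2 lY : (1 <= n)%nat -> 0 < p ->
  (forall d, bc2 d -> bc2 (reflF p 1 d)) -> first_eig n (2*p) (refl_coef p c) bc2 l2 ->
  (forall d, bc2 d -> (forall k t, (k < 2*n)%nat -> 0 <= t <= 2*p -> d k t = (-1)^k * d k (2*p - t)) -> bcY d) ->
  first_eig n p c bcY lY -> lY <= l2.
Proof.
  intros Hn Hp Hcl H2 Hr HY.
  destruct (first_sym _ _ _ _ _ Hn Hp (sym_refl_coef p c) Hcl H2) as (d & HS & Hbc & Hnz & Hs).
  eapply first_le; eauto.
  - apply Sol_restr; eauto.
  - apply restr_nz with n; auto.
Qed.

Ltac par k n Hk := destruct (parity k n Hk) as [(j & Hj & ->)|(j & Hj & ->)];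
  [rewrite ?pow_even | rewrite ?pow_odd].

Lemma L_NP (n : nat) (p : R) (c : nat -> R -> R) (Hn : (1 <= n)%nat) (Hp : 0 < p) lN lP : first_eig n p c (bc_N n p) lN -> first_eig n (2*p) (refl_coef p c) (bc_P n (2*p)) lP -> lN = lP.
Proof.
  intros HN HP. apply Rle_antisym.
  - apply (sym_le n p c (bc_P n (2*p)) (bc_N n p) lP lN Hn Hp); auto.
    + intros d H k Hk. rewrite reflF_0, reflF_2p, (H k Hk). auto.
    + intros d H Hs j Hj. assert (A := Hs (2*j+1)%nat 0 ltac:(lia) ltac:(lra)).
      assert (B := Hs (2*j+1)%nat p ltac:(lia) ltac:(lra)). assert (C := H (2*j+1)%nat ltac:(lia)).
      rewrite pow_odd in A, B. replace (2*p - 0) with (2*p) in A by ring.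
      replace (2*p - p) with p in B by ring. split; lra.
  - apply (ext_le n p c (bc_N n p) _ _ _ 1 Hn Hp HN HP).
    + intros d H k Hk. par k n Hk; [ring|]. destruct (H j Hj) as [_ B]. rewrite B. ring.
    + intros d H k Hk. rewrite glue_0, glue_2p by auto. par k n Hk; [ring|].
      destruct (H j Hj) as [A _]. rewrite A. ring.
Qed.

Lemma L_PD (n : nat) (p : R) (c : nat -> R -> R) (Hn : (1 <= n)%nat) (Hp : 0 < p) lP lD : first_eig n (2*p) (refl_coef p c) (bc_P n (2*p)) lP -> first_eig n p c (bc_D n p) lD -> lP < lD.
Proof.
  intros HP HD. apply (ext_lt n p c (bc_D n p) _ _ _ Hn Hp HD HP).
  - intros d H k Hk. par k n Hk; [|ring]. destruct (H j Hj) as [_ B]. rewrite B. ring.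
  - intros d H k Hk. rewrite glue_0, glue_2p by auto. par k n Hk; [|ring].
    destruct (H j Hj) as [A _]. rewrite A. ring.
Qed.

Lemma L_NN2 (n : nat) (p : R) (c : nat -> R -> R) (Hn : (1 <= n)%nat) (Hp : 0 < p) lN lN2 : first_eig n p c (bc_N n p) lN -> first_eig n (2*p) (refl_coef p c) (bc_N n (2*p)) lN2 -> lN = lN2.
Proof.
  intros HN HN2. apply Rle_antisym.
  - apply (sym_le n p c (bc_N n (2*p)) (bc_N n p) lN2 lN Hn Hp); auto.
    + intros d H j Hj. rewrite reflF_0, reflF_2p. destruct (H j Hj) as [A B]. rewrite A, B. split; ring.
    + intros d H Hs j Hj. assert (B := Hs (2*j+1)%nat p ltac:(lia) ltac:(lra)).
      destruct (H j Hj) as [A _].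
      rewrite pow_odd in B. replace (2*p - p) with p in B by ring. split; lra.
  - apply (ext_le n p c (bc_N n p) _ _ _ 1 Hn Hp HN HN2).
    + intros d H k Hk. par k n Hk; [ring|]. destruct (H j Hj) as [_ B]. rewrite B. ring.
    + intros d H j Hj. rewrite glue_0, glue_2p by auto. destruct (H j Hj) as [A _]. rewrite A. split; ring.
Qed.

Lemma L_NM1 (n : nat) (p : R) (c : nat -> R -> R) (Hn : (1 <= n)%nat) (Hp : 0 < p) lN2 lM1 : first_eig n (2*p) (refl_coef p c) (bc_N n (2*p)) lN2 -> first_eig n p c (bc_M1 n p) lM1 -> lN2 < lM1.
Proof.
  intros HN2 HM. apply (ext_lt n p c (bc_M1 n p) _ _ _ Hn Hp HM HN2).
  - intros d H k Hk. par k n Hk; [|ring]. destruct (H j Hj) as [_ B]. rewrite B. ring.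
  - intros d H j Hj. rewrite glue_0, glue_2p by auto. destruct (H j Hj) as [A _]. rewrite A. split; ring.
Qed.

Lemma L_D2M2 (n : nat) (p : R) (c : nat -> R -> R) (Hn : (1 <= n)%nat) (Hp : 0 < p) lM2 lD2 : first_eig n p c (bc_M2 n p) lM2 -> first_eig n (2*p) (refl_coef p c) (bc_D n (2*p)) lD2 -> lM2 = lD2.
Proof.
  intros HM HD2. apply Rle_antisym.
  - apply (sym_le n p c (bc_D n (2*p)) (bc_M2 n p) lD2 lM2 Hn Hp); auto.
    + intros d H j Hj. rewrite reflF_0, reflF_2p. destruct (H j Hj) as [A B]. rewrite A, B. split; ring.
    + intros d H Hs j Hj. assert (B := Hs (2*j+1)%nat p ltac:(lia) ltac:(lra)).
      destruct (H j Hj) as [A _].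
      rewrite pow_odd in B. replace (2*p - p) with p in B by ring. split; lra.
  - apply (ext_le n p c (bc_M2 n p) _ _ _ 1 Hn Hp HM HD2).
    + intros d H k Hk. par k n Hk; [ring|]. destruct (H j Hj) as [_ B]. rewrite B. ring.
    + intros d H j Hj. rewrite glue_0, glue_2p by auto. destruct (H j Hj) as [A _]. rewrite A. split; ring.
Qed.

Lemma L_DD (n : nat) (p : R) (c : nat -> R -> R) (Hn : (1 <= n)%nat) (Hp : 0 < p) lD2 lD : first_eig n (2*p) (refl_coef p c) (bc_D n (2*p)) lD2 -> first_eig n p c (bc_D n p) lD -> lD2 < lD.
Proof.
  intros HD2 HD. apply (ext_lt n p c (bc_D n p) _ _ _ Hn Hp HD HD2).
  - intros d H k Hk. par k n Hk; [|ring]. destruct (H j Hj) as [_ B]. rewrite B. ring.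
  - intros d H j Hj. rewrite glue_0, glue_2p by auto. destruct (H j Hj) as [A _]. rewrite A. split; ring.
Qed.

Lemma L_AM1 (n : nat) (p : R) (c : nat -> R -> R) (Hn : (1 <= n)%nat) (Hp : 0 < p) lA lM1 : first_eig n (2*p) (refl_coef p c) (bc_A n (2*p)) lA -> first_eig n p c (bc_M1 n p) lM1 -> lA <= lM1.
Proof.
  intros HA HM. apply (ext_le n p c (bc_M1 n p) _ _ _ (-1) Hn Hp HM HA).
  - intros d H k Hk. par k n Hk; [|ring]. destruct (H j Hj) as [_ B]. rewrite B. ring.
  - intros d H k Hk. rewrite glue_0, glue_2p by auto. par k n Hk; [ring|].
    destruct (H j Hj) as [A _]. rewrite A. ring.
Qed.

Lemma L_AM2 (n : nat) (p : R) (c : nat -> R -> R) (Hn : (1 <= n)%nat) (Hp : 0 < p) lA lM2 : first_eig n (2*p) (refl_coef p c) (bc_A n (2*p)) lA -> first_eig n p c (bc_M2 n p) lM2 -> lA = lM2.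
Proof.
  intros HA HM. apply Rle_antisym.
  - apply (ext_le n p c (bc_M2 n p) _ _ _ 1 Hn Hp HM HA).
    + intros d H k Hk. par k n Hk; [ring|]. destruct (H j Hj) as [_ B]. rewrite B. ring.
    + intros d H k Hk. rewrite glue_0, glue_2p by auto. par k n Hk; [|ring].
      destruct (H j Hj) as [A _]. rewrite A. ring.
  - apply (sym_le n p c (bc_A n (2*p)) (bc_M2 n p) lA lM2 Hn Hp); auto.
    + intros d H k Hk. rewrite reflF_0, reflF_2p, (H k Hk). ring.
    + intros d H Hs j Hj. assert (A := Hs (2*j)%nat 0 ltac:(lia) ltac:(lra)).
      assert (B := Hs (2*j+1)%nat p ltac:(lia) ltac:(lra)). assert (C := H (2*j)%nat ltac:(lia)).
      rewrite pow_odd in B. rewrite pow_even in A. replace (2*p - 0) with (2*p) in A by ring.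
      replace (2*p - p) with p in B by ring. split; lra.
Qed.


Theorem theorem4p2 (n : nat) (T : R) (a : nat -> R -> R)
  (lN lD lM1 lM2 lP2 lA2 lN2 lD2 lP4 : R) :
  (1 <= n)%nat -> 0 < T ->
  (forall k, (k < 2 * n)%nat -> L1 0 T (a k)) ->
  first_eig n T a (bc_N n T) lN ->
  first_eig n T a (bc_D n T) lD ->
  first_eig n T a (bc_M1 n T) lM1 ->
  first_eig n T a (bc_M2 n T) lM2 ->
  first_eig n (2 * T) (refl_coef T a) (bc_P n (2 * T)) lP2 ->
  first_eig n (2 * T) (refl_coef T a) (bc_A n (2 * T)) lA2 ->
  first_eig n (2 * T) (refl_coef T a) (bc_N n (2 * T)) lN2 ->
  first_eig n (2 * T) (refl_coef T a) (bc_D n (2 * T)) lD2 ->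
  first_eig n (4 * T) (refl_coef (2 * T) (refl_coef T a)) (bc_P n (4 * T)) lP4 ->
  (lN = lP2 /\ lP2 < lD) /\
  (lN = lN2 /\ lN2 < lM1) /\
  lN = lP4 /\
  (lM2 = lD2 /\ lD2 < lD) /\
  lN < lM2 /\
  lA2 = Rmin lM1 lM2.
Proof.
  intros Hn HT _ HN HD HM1 HM2 HP2 HA2 HN2 HD2 HP4.
  replace (4 * T) with (2 * (2 * T)) in HP4 by ring.
  assert (HT2 : 0 < 2 * T) by lra.
  assert (E1 := L_NP n T a Hn HT _ _ HN HP2).
  assert (E2 := L_PD n T a Hn HT _ _ HP2 HD).
  assert (E3 := L_NN2 n T a Hn HT _ _ HN HN2).
  assert (E4 := L_NM1 n T a Hn HT _ _ HN2 HM1).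
  assert (E5 := L_NP n (2*T) (refl_coef T a) Hn HT2 _ _ HN2 HP4).
  assert (E6 := L_D2M2 n T a Hn HT _ _ HM2 HD2).
  assert (E7 := L_DD n T a Hn HT _ _ HD2 HD).
  assert (E8 := L_PD n (2*T) (refl_coef T a) Hn HT2 _ _ HP4 HD2).
  assert (E9 := L_AM1 n T a Hn HT _ _ HA2 HM1).
  assert (E10 := L_AM2 n T a Hn HT _ _ HA2 HM2).
  split; [split; auto|]. split; [split; auto|]. split; [lra|]. split; [split; auto|]. split; [lra|].
  unfold Rmin. destruct (Rle_dec lM1 lM2); lra.
Qed.
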